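(* Let $G$ be an $n$-vertex digraph which is an orientation of a connected simple graph containing exactly one cycle, and suppose $G$ has no sources. Then $G$ has a quasi-kernel with at most $\frac{n+2}{3}$ vertices. Moreover, the bound is sharp: for every $n\ge 4$ with $n\equiv 1\pmod 3$, the cyclically oriented cycle on $n$ vertices has no quasi-kernel with fewer than $\frac{n+2}{3}$ vertices.
   Context: Digraphs are finite, without loops and without multiple edges in the same direction. A source is a vertex of in-degree $0$. For $V'\subseteq V(G)$, $\Gamma^+(V')$ is the set of out-neighbours of vertices of $V'$ and $\Gamma^+_2(V')=V'\cup\Gamma^+(V')\cup\Gamma^+(\Gamma^+(V'))$. A quasi-kernel is an independent set $Q$ with $\Gamma^+_2(Q)=V(G)$. *)

(* Defs.v *)
From mathcomp Require Import all_boot.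
Set Implicit Arguments. Unset Strict Implicit. Unset Printing Implicit Defensive.

Definition outN (T : finType) (e : rel T) (A : {set T}) : {set T} :=
  [set y | [exists x in A, e x y]].
Definition out2 (T : finType) (e : rel T) (A : {set T}) : {set T} :=
  A :|: outN e A :|: outN e (outN e A).

Definition independent (T : finType) (e : rel T) (Q : {set T}) : Prop :=
  forall x y, x \in Q -> y \in Q -> ~~ e x y.

Definition quasi_kernel (T : finType) (e : rel T) (Q : {set T}) : Prop :=
  independent e Q /\ out2 e Q = setT.

Definition no_sources (T : finType) (e : rel T) : Prop :=
  forall x, exists y, e y x.

Definition oriented (T : finType) (e : rel T) : Prop :=
  irreflexive e /\ forall x y, e x y -> ~~ e y x.

Definition adj (T : finType) (e : rel T) : rel T := fun x y => e x y || e y x.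

Definition connected_und (T : finType) (e : rel T) : Prop :=
  forall x y, connect (adj e) x y.

Definition is_cycle (T : finType) (e : rel T) (s : seq T) : Prop :=
  3 <= size s /\ ucycle (adj e) s.

Definition cycle_edge (T : finType) (s : seq T) : rel T :=
  fun x y => [&& x \in s, y \in s & (next s x == y) || (next s y == x)].

(* the underlying graph contains exactly one cycle (cycles being identified
   with their edge sets) *)
Definition exactly_one_cycle (T : finType) (e : rel T) : Prop :=
  exists s, is_cycle e s /\
    forall s', is_cycle e s' -> forall x y, cycle_edge s' x y = cycle_edge s x y.

Definition cyc_rel (n : nat) : rel 'I_n :=
  fun i j => val j == (val i).+1 %% n.
Arguments cyc_rel n : clear implicits.

(* Main.v *)
Require Import Defs.
From mathcomp Require Import all_boot zify.
Set Implicit Arguments. Unset Strict Implicit. Unset Printing Implicit Defensive.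

Section P1.
Variables (T : finType) (e : rel T).
Hypotheses (Hor : oriented e) (Hone : exactly_one_cycle e) (Hns : no_sources e).

Definition par x := odflt x [pick y | e y x].

Lemma par_e x : e (par x) x.
Proof.
rewrite /par; case: pickP => [y //|h]; have [y hy] := Hns x; by rewrite h in hy.
Qed.

Lemma irr x : e x x = false.
Proof. by case: Hor => h _; apply: h. Qed.

Lemma asym x y : e x y -> e y x -> False.
Proof. by case: Hor => _ h /h /negP. Qed.

Lemma cycles_eq s1 s2 : is_cycle e s1 -> is_cycle e s2 -> cycle_edge s1 =2 cycle_edge s2.
Proof.
case: Hone => s [_ H] h1 h2 x y; by rewrite (H _ h1) (H _ h2).
Qed.

Lemma next_orbit x z : fcycle par (orbit par x) -> z \in orbit par x ->
  next (orbit par x) z = par z.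
Proof. by move=> hc hz; have /eqP := next_cycle hc hz. Qed.

Lemma orbit_cycle x : fcycle par (orbit par x) -> is_cycle e (orbit par x).
Proof.
move=> hc; split; last first.
  rewrite /ucycle orbit_uniq andbT; apply: sub_cycle hc => a b /= /eqP <-.
  by rewrite /adj par_e orbT.
have := (orbitPcycle 0 4).1 hc; rewrite size_orbit.
have := order_gt0 par x.
case: (order par x) => [|[|[|k]]] //= _.
  by move=> h; have := par_e x; rewrite h irr.
move=> h; have := par_e x; have := par_e (par x); rewrite h => h1 h2.
by case: (asym h1 h2).
Qed.

Lemma periodic_in x y : fcycle par (orbit par x) -> fcycle par (orbit par y) ->
  y \in orbit par x.
Proof.
move=> hx hy; have := cycles_eq (orbit_cycle hx) (orbit_cycle hy) y (par y).
rewrite /cycle_edge (next_orbit hy (in_orbit _ _)) eqxx orTb andbT.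
have hpy : par y \in orbit par y by apply: mem_orbit; apply: in_orbit.
rewrite hpy in_orbit /=.
by case/andP.
Qed.

Definition lastp z := iter (order par z).-1 par z.

Lemma lastp_per z : fcycle par (orbit par (lastp z)).
Proof.
rewrite -fconnect_f; have := looping_order par z.
rewrite /looping => /trajectP[i hi].
rewrite /lastp -iterS orderSpred => ->.
have -> : (order par z).-1 = ((order par z).-1 - i) + i.
  have := order_gt0 par z; lia.
by rewrite iterD fconnect_iter.
Qed.

Lemma lastp_conn z : fconnect par z (lastp z).
Proof. exact: fconnect_iter. Qed.

Variable c0 : T.
Hypothesis hc0 : fcycle par (orbit par c0).

Lemma reach z : fconnect par z c0.
Proof.
apply: connect_trans (lastp_conn z) _.
rewrite fconnect_orbit; exact: periodic_in (lastp_per z) hc0.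
Qed.

Lemma arcs a b : e a b -> a = par b.
Proof.
move=> hab; case: (eqVneq a (par b)) => // hne; exfalso.
pose R := [rel x y | adj e x y && ~~ (((x == a) && (y == b)) || ((x == b) && (y == a)))].
have symR : symmetric R.
  move=> x y /=; rewrite /adj orbC; congr (_ && ~~ _).
  by rewrite orbC; congr (_ || _); rewrite andbC.
have Rp z : R z (par z).
  rewrite /= /adj par_e orbT /=; apply/negP => /orP[/andP[/eqP ea /eqP eb]|/andP[/eqP ea /eqP eb]].
    move: eb; rewrite ea => eb; have := par_e a; rewrite eb => h; exact: asym hab h.
  by move: eb; rewrite ea => eb; rewrite eb eqxx in hne.
have sub : subrel (connect (frel par)) (connect R).
  apply: connect_sub => x y hxy; rewrite -(eqP hxy); apply: connect1; exact: Rp.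
have conn : connect R b a.
  apply: connect_trans (sub _ _ (reach b)) _.
  by rewrite (sym_connect_sym symR); apply: sub; apply: reach.
case/connectP: conn => q hq ea.
move: ea; case: (shortenP hq) => q' hq' hu' _ ea.
have hcyc : is_cycle e (b :: q').
  split.
    case: q' hq' hu' ea => [|c1 [|c2 q2]] //=.
      by move=> _ _ eab; move: hab; rewrite eab irr.
    by move=> /andP[hr _] _ ea'; move: hr; rewrite -ea' /= !eqxx orbT andbF.
  rewrite /ucycle hu' andbT /= rcons_path -ea /adj hab andbT.
  by apply: sub_path hq' => x y /andP[].
have hce : cycle_edge (b :: q') a b.
  rewrite /cycle_edge mem_head ea mem_last.
  have hb : b \notin q' by case/andP: hu'.
  have hp : prev (b :: q') b = last b q'.
    rewrite prev_nth mem_head (memNindex hb).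
    by rewrite -[size q']/((size (b :: q')).-1) nth_last.
  by rewrite -hp (next_prev hu') eqxx.
move: hce; rewrite (cycles_eq hcyc (orbit_cycle hc0)) /cycle_edge.
case/and3P => ha hb /orP[] /eqP.
  rewrite next_orbit // => h; have := par_e a; rewrite h => h'; exact: asym hab h'.
by rewrite next_orbit // => h; rewrite h eqxx in hne.
Qed.


Definition m z := findex par z c0.

Lemma m_lt z : m z < order par z.
Proof. exact: findex_max (reach z). Qed.

Lemma iter_m z : iter (m z) par z = c0.
Proof. exact: iter_findex (reach z). Qed.

Lemma m_rec z : z != c0 -> m z = (m (par z)).+1.
Proof. by move=> h; apply: fconnect_findex (reach z) _; rewrite eq_sym. Qed.

Lemma m_c0 : m c0 = 0.
Proof. exact: findex0. Qed.

Lemma m_min z i : i < m z -> iter i par z != c0.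
Proof.
move=> hi; apply/eqP => h.
have := findex_iter (ltn_trans hi (m_lt z)); rewrite h -/(m z) => h'.
by rewrite h' ltnn in hi.
Qed.

Lemma iter_inj z i j : i < m z -> j < m z -> iter i par z = iter j par z -> i = j.
Proof.
move=> hi hj h.
rewrite -(findex_iter (ltn_trans hi (m_lt z))) -(findex_iter (ltn_trans hj (m_lt z))).
by rewrite h.
Qed.

Definition d1 := par c0.
Definition c2 := par d1.
Definition kk := (m d1).+1.

Lemma m_d1 : 2 <= m d1.
Proof.
have := iter_m d1; case hm: (m d1) => [|[|n]] //=.
  by rewrite /d1 => h; have := par_e c0; rewrite h irr.
rewrite /d1 => h; have := par_e c0; have := par_e (par c0); rewrite h => h1 h2.
by case: (asym h1 h2).
Qed.

Definition sk z := ((z == c0) && (kk %% 3 != 0)) || ((z == c2) && (kk %% 3 == 1)).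
Definition w z := 1 + sk z.
Definition L z := \sum_(i < m z) w (iter i par z).

Lemma L_rec z : z != c0 -> L z = w z + L (par z).
Proof.
move=> h; rewrite /L m_rec // big_ord_recl /=; congr (_ + _).
  by apply: eq_bigr => i _; rewrite add0n -iterS iterSr.
Qed.

Lemma L_c0 : L c0 = 0.
Proof. by rewrite /L m_c0 big_ord0. Qed.

Lemma sum_aux n (b : bool) : \sum_(i < n.+2) (1 + ((i == 1 :> nat) && b)) = n.+2 + b.
Proof.
rewrite big_split /= sum_nat_const card_ord muln1; congr (_ + _).
rewrite big_ord_recl big_ord_recl /= big1 ?addn0 //.
Qed.

Lemma L_d1 : L d1 = m d1 + (kk %% 3 == 1).
Proof.
rewrite /L.
have h2 := m_d1.
have -> : \sum_(i < m d1) w (iter i par d1) = \sum_(i < m d1) (1 + ((i == 1 :> nat) && (kk %% 3 == 1))).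
  apply: eq_bigr => i _; rewrite /w /sk; congr (_ + _).
  rewrite (negbTE (m_min (ltn_ord i))) /=.
  have -> : (iter i par d1 == c2) = (i == 1 :> nat).
    apply/eqP/eqP => [h|->//]; apply: iter_inj (ltn_ord i) h2 _; exact: h.
  by [].
move: h2; case: (m d1) => [|[|n]] //= _; exact: sum_aux.
Qed.

Definition ell z := L z %% 3.

Lemma key z : ell z = (w z + ell (par z)) %% 3.
Proof.
rewrite /ell modnDmr; case: (eqVneq z c0) => [->|h]; last by rewrite L_rec.
rewrite L_c0 -/d1 L_d1 /w /sk eqxx /= /kk.
have h2 := m_d1.
case: (eqVneq c0 c2) => [hc|hc].
  exfalso; have := m_min h2; move: hc; rewrite /c2 /= => <-; by rewrite eqxx.
rewrite andFb orbF; lia.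
Qed.

Lemma sk_ind z : ~~ (sk z && sk (par z)).
Proof.
have h2 := m_d1.
have f1 : par c0 != c0 by apply/eqP => h; have := par_e c0; rewrite h irr.
have f2 : par c0 != c2.
  apply/eqP => h; have := @iter_inj d1 0 1 (leq_trans (isT : 0 < 2) h2) h2 h.
  by [].
have f4 : par c2 != c2 by apply/eqP => h; have := par_e c2; rewrite h irr.
have f3 : kk %% 3 == 1 -> par c2 != c0.
  move=> hk; have h3 : 2 < m d1 by move: hk; rewrite /kk; lia.
  exact: (m_min h3).
apply/negP => /andP[h1]; rewrite /sk; case/orP: h1 => /andP[/eqP -> hk].
  by rewrite (negbTE f1) (negbTE f2).
by rewrite (negbTE (f3 hk)) (negbTE f4).
Qed.

Definition Q r := [set z | (ell z == r) || (sk z && (ell z == (r + 1) %% 3))].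

Lemma ell_lt z : ell z < 3.
Proof. exact: ltn_pmod. Qed.

Lemma Q_ind r : r < 3 -> independent e (Q r).
Proof.
move=> hr x y; rewrite !inE => hx hy; apply/negP => he.
have ex := arcs he.
have k := key y; have hs := sk_ind y; rewrite -ex in k hs.
have := ell_lt x; have := ell_lt y.
move: hx hy k hs; rewrite /w; case: (sk x); case: (sk y) => /=; lia.
Qed.

Lemma in_outN (A : {set T}) x y : x \in A -> e x y -> y \in outN e A.
Proof. by move=> hx hxy; rewrite inE; apply/existsP; exists x; rewrite hx hxy. Qed.

Lemma Q_cover r : r < 3 -> out2 e (Q r) = setT.
Proof.
move=> hr; apply/setP => z; rewrite in_setT.
have hb : (z \in Q r) || (par z \in Q r) || (par (par z) \in Q r).
  have k1 := key z; have k2 := key (par z); have hs := sk_ind z.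
  have := ell_lt z; have := ell_lt (par z); have := ell_lt (par (par z)).
  rewrite !inE; move: k1 k2 hs; rewrite /w.
  case: (sk z); case: (sk (par z)) => /=; lia.
rewrite /out2; case/orP: hb => [/orP[h|h]|h].
- by apply/setUP; left; apply/setUP; left.
- by apply/setUP; left; apply/setUP; right; exact: in_outN h (par_e z).
- by apply/setUP; right; apply: in_outN (in_outN h (par_e _)) (par_e z).
Qed.

Lemma card_sum (A : {set T}) : #|A| = \sum_z (z \in A).
Proof.
rewrite -sum1_card big_mkcond /=; apply: eq_bigr => z _; by case: (z \in A).
Qed.

Lemma count3 : #|Q 0| + #|Q 1| + #|Q 2| <= #|T| + 2.
Proof.
have h : #|Q 0| + #|Q 1| + #|Q 2| <= #|[set: T]| + #|[set z | sk z]|.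
  rewrite !card_sum -!big_split /=; apply: leq_sum => z _; rewrite !inE.
  have := ell_lt z; case: (sk z) => /=; lia.
have hS : #|[set z | sk z]| <= 2.
  apply: leq_trans (_ : #|[set c0; c2]| <= 2).
    apply: subset_leq_card; apply/subsetP => z; rewrite !inE /sk.
    by case/orP => /andP[-> _]; rewrite ?orbT.
  by rewrite cards2; case: (c0 != c2).
rewrite cardsT in h; lia.
Qed.

Lemma part1_c0 : exists Q : {set T}, quasi_kernel e Q /\ 3 * #|Q| <= #|T| + 2.
Proof.
have hc := count3.
have qk r : r < 3 -> quasi_kernel e (Q r) by move=> hr; split; [exact: Q_ind|exact: Q_cover].
case: (leqP (3 * #|Q 0|) (#|T| + 2)) => h0; first by exists (Q 0); split => //; exact: qk.
case: (leqP (3 * #|Q 1|) (#|T| + 2)) => h1; first by exists (Q 1); split => //; exact: qk.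
case: (leqP (3 * #|Q 2|) (#|T| + 2)) => h2; first by exists (Q 2); split => //; exact: qk.
lia.
Qed.

End P1.
Lemma cyc_outN n (A : {set 'I_n.+1}) : #|outN (cyc_rel n.+1) A| <= #|A|.
Proof.
pose succ (i : 'I_n.+1) : 'I_n.+1 := inord (i.+1 %% n.+1).
apply: leq_trans (leq_imset_card succ A).
apply: subset_leq_card; apply/subsetP => y; rewrite inE => /existsP[x /andP[xA]].
rewrite /cyc_rel => /eqP hy; apply/imsetP; exists x => //.
apply: val_inj; rewrite /succ /= inordK //; have := ltn_pmod x.+1 (ltn0Sn n); lia.
Qed.

Lemma card3U (T : finType) (A B C : {set T}) : #|A :|: B :|: C| <= #|A| + #|B| + #|C|.
Proof.
apply: leq_trans (leq_card_setU _ _).1 _.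
by rewrite leq_add2r; exact: (leq_card_setU _ _).1.
Qed.

Lemma part2 (n : nat) : 4 <= n -> n %% 3 = 1 ->
      forall Q : {set 'I_n}, quasi_kernel (cyc_rel n) Q -> n + 2 <= 3 * #|Q|.
Proof.
case: n => [//|n] h4 h3 Q [_ hQ].
have : #|[set: 'I_n.+1]| <= 3 * #|Q|.
  rewrite -hQ /out2.
  apply: leq_trans (card3U _ _ _) _.
  have h1 := cyc_outN Q; have h2 := cyc_outN (outN (cyc_rel n.+1) Q).
  have h3' := leq_trans h2 h1.
  rewrite mulSn mulSn mul1n addnA; apply: leq_add => //; exact: leq_add.
rewrite cardsT card_ord; lia.
Qed.

Theorem mainTheorem8 :
  (forall (T : finType) (e : rel T),
      oriented e -> connected_und e -> exactly_one_cycle e -> no_sources e ->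
      exists Q : {set T}, quasi_kernel e Q /\ 3 * #|Q| <= #|T| + 2)
  /\
  (forall n : nat, 4 <= n -> n %% 3 = 1 ->
      forall Q : {set 'I_n}, quasi_kernel (cyc_rel n) Q -> n + 2 <= 3 * #|Q|).
Proof.
split; last exact: part2.
move=> T e Hor _ Hone Hns.
have [x0 _] : exists x0 : T, True.
  case: (Hone) => s [[hs _] _]; case: s hs => [//|x0 s] _; by exists x0.
exact: (part1_c0 Hor Hone Hns (lastp_per e x0)).
Qed.
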